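(* Suppose an SCC $F$ is mixed-Nash-A-implemented by $\mathcal M=\langle M,g\rangle$. Let $(i,\theta)\in\mathcal I\times\Theta$ and $\lambda\in MNE^{(\mathcal M,\theta)}$. If $F(\theta)\subseteq\arg\min_{z\in Z^*}u_i^\theta(z)$, $\Xi_i(\theta)\ne\emptyset$, and $Z^*\cap\mathcal L_i^Z(F(\theta),\theta)$ is an $i$-$Z^*$-max set, then $$\bigcup_{m_i\in M_i}\mathrm{SUPP}[g(m_i,\lambda_{-i})]\subseteq Z^*\cap\mathcal L_i^Z(F(\theta),\theta)\cap\Big(\bigcup_{K\in\Xi_i(\theta)}\bigcap_{\theta'\in K}F(\theta')\Big).$$
   Context: Standing setup: $\mathcal I=\{1,\dots,I\}$ finite, $I\ge 3$; $\Theta$ finite or countably infinite; $Z$ finite; $Y=\Delta(Z)$; $u_i^\theta:Z\to\mathbb R$, $U_i^\theta(y)=\sum_zy_zu_i^\theta(z)$; $\mathcal L_i^Z(\alpha,\theta)=\{z\in Z:U_i^\theta(\alpha)\ge u_i^\theta(z)\}$ and $\mathcal L_i^Z(E,\theta)=\bigcap_{z\in E}\mathcal L_i^Z(z,\theta)$. A mechanism $\mathcal M=\langle M=\times_iM_i,g:M\to Y\rangle$ has countable $M_i$; $g(\lambda)$, $g(m_i,\lambda_{-i})$ are induced lotteries; $MNE^{(\mathcal M,\theta)}$ the mixed Nash equilibria at $\theta$. $F$ is mixed-Nash-A-implemented by $\mathcal M$ if $\bigcup_{\lambda\in MNE^{(\mathcal M,\theta)}}\mathrm{SUPP}(g[\lambda])=F(\theta)$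 for all $\theta$. A nonempty $E\subseteq Z$ is an $i$-max set if for some $\theta$, $E\subseteq\arg\max_{z\in E}u_i^\theta(z)$ and $E\subseteq\arg\max_{z\in Z}u_j^\theta(z)$ for all $j\ne i$. $Z^*=\bigcup_\theta F(\theta)$ if $Z$ is an $i$-max set for some $i$, else $Z^*=Z$. A nonempty $E\subseteq Z^*$ is an $i$-$Z^*$-$\theta$-max set if $E\subseteq\arg\max_{z\in E}u_i^\theta(z)$ and $E\subseteq\arg\max_{z\in Z^*}u_j^\theta(z)$ for all $j\ne i$; $\Lambda^i(E)=\{\theta:E\text{ is an }i\text{-}Z^*\text{-}\theta\text{-max set}\}$ ($=\emptyset$ for $E=\emptyset$); $E$ is an $i$-$Z^*$-max set if $\Lambda^i(E)\ne\emptyset$. $\Theta_i^\theta=\{\theta':F(\theta)\text{ is an }i\text{-}Z^*\text{-}\theta'\text{-max set and }F(\theta)\subseteq F(\theta')\}$; $\Xi_i(\theta)=\{K\subseteq\Theta_i^\theta,K\ne\emptyset:\Theta_i^\theta\cap\Lambda^i(Z^*\cap\mathcal L_i^Z(F(\theta),\theta)\cap\bigcap_{\theta'\in K}F(\theta'))=K\}$. *)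

(* Defs.v *)
From HB Require Import structures.
From mathcomp Require Import all_boot all_order all_algebra.
From mathcomp Require Import all_classical all_reals.
From mathcomp Require Import esum.
Set Implicit Arguments. Unset Strict Implicit. Unset Printing Implicit Defensive.
Import Order.TTheory GRing.Theory Num.Theory.
Local Open Scope classical_set_scope.
Local Open Scope ring_scope.

Section Game.
Variables (R : realType) (n : nat) (Theta : countType) (Z : finType).
Variable (u : 'I_n -> Theta -> Z -> R).

Definition is_lottery (p : Z -> R) : Prop :=
  (forall z, 0 <= p z) /\ \sum_(z : Z) p z = 1.

Definition Uexp (i : 'I_n) (th : Theta) (p : Z -> R) : R :=
  \sum_(z : Z) p z * u i th z.

Definition is_mixed (T : countType) (q : T -> R) : Prop :=
  (forall t, 0 <= q t) /\ (\esum_(t in [set: T]) (q t)%:E = 1)%E.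

Definition LZ (i : 'I_n) (th : Theta) (p : Z -> R) : set Z :=
  [set z | u i th z <= Uexp i th p].

(* L_i^Z(E, theta) = intersection over z in E of L_i^Z(z,theta),
   where z is viewed as the degenerate lottery (U_i^theta(delta_z) = u_i^theta(z)) *)
Definition LZset (i : 'I_n) (th : Theta) (E : set Z) : set Z :=
  [set z' | forall z, E z -> u i th z' <= u i th z].

Definition argmax_in (f : Z -> R) (S : set Z) : set Z :=
  [set z | S z /\ forall z', S z' -> f z' <= f z].
Definition argmin_in (f : Z -> R) (S : set Z) : set Z :=
  [set z | S z /\ forall z', S z' -> f z <= f z'].

Definition imax_set (i : 'I_n) (E : set Z) : Prop :=
  E !=set0 /\
  exists th : Theta, E `<=` argmax_in (u i th) E /\
    forall j : 'I_n, j != i -> E `<=` argmax_in (u j th) [set: Z].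

Variable F : Theta -> set Z.

Definition Zstar : set Z :=
  if `[< exists i : 'I_n, imax_set i [set: Z] >]
  then [set z | exists th, F th z] else [set: Z].

Definition iZstar_th_max (i : 'I_n) (th : Theta) (E : set Z) : Prop :=
  E !=set0 /\ E `<=` Zstar /\ E `<=` argmax_in (u i th) E /\
  forall j : 'I_n, j != i -> E `<=` argmax_in (u j th) Zstar.

(* Lambda^i(E) (empty for E empty, since max sets are nonempty) *)
Definition Lambda (i : 'I_n) (E : set Z) : set Theta :=
  [set th | iZstar_th_max i th E].

Definition iZstar_max (i : 'I_n) (E : set Z) : Prop := Lambda i E !=set0.

Definition Theta_i (i : 'I_n) (th : Theta) : set Theta :=
  [set th' | iZstar_th_max i th' (F th) /\ F th `<=` F th'].

Definition Xi (i : 'I_n) (th : Theta) : set (set Theta) :=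
  [set K | K `<=` Theta_i i th /\ K !=set0 /\
     Theta_i i th `&` Lambda i (Zstar `&` LZset i th (F th)
                                  `&` \bigcap_(th' in K) F th') = K].

End Game.

Section Mechanism.
Variables (R : realType) (n : nat) (Z : finType) (M : 'I_n -> countType).

Definition profile := {dffun forall i : 'I_n, M i}.

Definition is_mechanism (g : profile -> Z -> R) : Prop :=
  forall m, is_lottery (g m).

Definition is_mixed_profile (lam : forall i : 'I_n, M i -> R) : Prop :=
  forall i, is_mixed (lam i).

Definition glot (g : profile -> Z -> R) (lam : forall i : 'I_n, M i -> R)
  (z : Z) : R :=
  fine (\esum_(m in [set: profile]) ((\prod_(i : 'I_n) lam i (m i)) * g m z)%:E)%E.

Definition glot_dev (g : profile -> Z -> R) (lam : forall i : 'I_n, M i -> R)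
  (i : 'I_n) (mi : M i) (z : Z) : R :=
  fine (\esum_(m in [set m : profile | m i = mi])
          ((\prod_(j : 'I_n | j != i) lam j (m j)) * g m z)%:E)%E.

Definition SUPP (p : Z -> R) : set Z := [set z | 0 < p z].

Variables (Theta : countType) (u : 'I_n -> Theta -> Z -> R).

Definition MNE (g : profile -> Z -> R) (th : Theta) :
  set (forall i : 'I_n, M i -> R) :=
  [set lam | is_mixed_profile lam /\
     forall (i : 'I_n) (mi : M i),
       Uexp u i th (glot_dev g lam mi) <= Uexp u i th (glot g lam)].

Definition mixed_nash_A_impl (F : Theta -> set Z) (g : profile -> Z -> R) : Prop :=
  forall th, \bigcup_(lam in MNE g th) SUPP (glot g lam) = F th.

End Mechanism.

(* Main.v *)
Require Import Defs.
From HB Require Import structures.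
From mathcomp Require Import all_boot all_order all_algebra.
From mathcomp Require Import all_classical all_reals.
From mathcomp Require Import ereal esum.
Import Order.TTheory GRing.Theory Num.Theory.
Local Open Scope classical_set_scope.
Local Open Scope ring_scope.


Section EsumAux.
Context {R : realType} {T : choiceType}.
Local Open Scope ereal_scope.

Lemma esumZl (D : set T) (r : R) (a : T -> \bar R) : (0 <= r)%R ->
  (forall t, D t -> 0 <= a t) ->
  \esum_(t in D) (r%:E * a t) = r%:E * \esum_(t in D) a t.
Proof.
move=> r0 a0; rewrite /esum -ereal_supZl //; last first.
  by apply/set0P; exists 0; exists set0; [exact: fsets_set0|rewrite fsbig_set0].
congr ereal_sup; rewrite image_comp; apply: eq_imagel => X [finX XD] /=.
rewrite !fsbig_finite//= !big_seq ge0_sume_distrr// => t.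
by rewrite in_fset_set// inE => /XD /a0.
Qed.

Lemma esum_single (D : set T) (t0 : T) (a : T -> \bar R) : D t0 -> 0 <= a t0 ->
  (forall t, D t -> t <> t0 -> a t = 0) ->
  \esum_(t in D) a t = a t0.
Proof.
move=> Dt0 a0 h.
rewrite (esumID [set t0]); last first.
  by move=> t Dt; case: (pselect (t = t0)) => [->//|/h]; move=> /(_ Dt) ->.
rewrite (_ : D `&` [set t0] = [set t0]); last first.
  by apply/seteqP; split=> [t [] //|t ->].
rewrite esum_set1// esum1 ?adde0// => t [Dt nt]; exact: h.
Qed.

Lemma esum_pos_ex (D : set T) (a : T -> \bar R) :
  (forall t, D t -> 0 <= a t) -> (0 < fine (\esum_(t in D) a t))%R ->
  exists2 t, D t & 0 < a t.
Proof.
move=> a0 hp; apply: contrapT => hn.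
suff : \esum_(t in D) a t = 0 by move=> e; rewrite e /= ltxx in hp.
apply: esum1 => t Dt; apply/eqP; rewrite eq_le a0 // andbT.
by rewrite leNgt; apply/negP => at0; apply: hn; exists t.
Qed.

End EsumAux.

Section Prof.
Context {n : nat} {M : 'I_n -> countType}.
Local Notation prof := (profile M).

Definition upd (m : prof) (j : 'I_n) (x : M j) : prof :=
  @finfun _ (fun i => M i) (fun l => @eqtype.dfwith _ (fun i => M i) (fun k => m k) j x l).

Arguments upd m [j] x.

Lemma upd_in (m : prof) j (x : M j) : upd m x j = x.
Proof. by rewrite /upd ffunE dfwith_in. Qed.

Lemma upd_out (m : prof) j (x : M j) l : j != l -> upd m x l = m l.
Proof. by move=> h; rewrite /upd ffunE dfwith_out. Qed.

Lemma upd_id (m : prof) j : upd m (m j) = m.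
Proof.
apply/ffunP => l; case: (eqVneq j l) => [<-|h]; first by rewrite upd_in.
by rewrite upd_out.
Qed.

Lemma upd_upd (m : prof) j (x y : M j) : upd (upd m x) y = upd m y.
Proof.
apply/ffunP => l; case: (eqVneq j l) => [<-|h]; first by rewrite !upd_in.
by rewrite !upd_out.
Qed.

End Prof.
Arguments upd {n M} m [j] x.
Arguments upd_in {n M} m [j] x.
Arguments upd_out {n M} m [j] x [l].

Section Prod.
Context {R : realType} {n : nat} (M : 'I_n -> countType).
Local Notation prof := (profile M).
Variable lam : forall j : 'I_n, M j -> R.
Hypothesis lamP : forall j, is_mixed (lam j).
Variable m0 : prof.

Definition Xs (s : seq 'I_n) : set prof :=
  [set m | forall l, l \notin s -> m l = m0 l].

Lemma esum_prod_seq (s : seq 'I_n) : uniq s ->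
  (\esum_(m in Xs s) (\prod_(l | l \in s) lam l (m l))%:E = 1)%E.
Proof.
elim: s => [_|j s IH /= /andP[js us]].
  rewrite (@esum_single _ _ _ m0).
  - by rewrite big_pred0.
  - by [].
  - by rewrite big_pred0.
  - move=> m Xm; case; apply/ffunP => l; exact: Xm.
rewrite (reindex_esum ([set: M j] `*`` (fun _ => Xs s)) _
   (fun p => upd p.2 p.1)); last first.
  split.
  - move=> [x m'] [_ /= Xm'] l; rewrite inE negb_or => /andP[lj ls].
    by rewrite upd_out ?Xm'// eq_sym.
  - move=> [x1 m1] [x2 m2]; rewrite !inE => -[_ /= X1] [_ /= X2] /= e.
    have ex : x1 = x2 by rewrite -(upd_in m1 x1) e upd_in.
    subst x2; congr pair; apply/ffunP => l.
    case: (eqVneq j l) => [<-|h]; first by rewrite X1 ?X2.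
    by rewrite -(upd_out m1 x1 h) e upd_out.
  - move=> m Xm; exists (m j, upd m (m0 j)) => /=; last first.
      by rewrite upd_upd upd_id.
    split=> // l ls; case: (eqVneq j l) => [<-|h]; first by rewrite upd_in.
    by rewrite upd_out// Xm// inE negb_or ls eq_sym h.
rewrite -(@esum_esum _ _ _ [set: M j] (fun _ => Xs s)
   (fun x m' => (\prod_(l | l \in j :: s) lam l (upd m' x l))%:E)); last first.
  move=> x m' _ _; rewrite lee_fin; apply: prodr_ge0 => l _.
  by case: (lamP l) => h _; exact: h.
transitivity (\esum_(x in [set: M j]) (lam j x)%:E)%E; last by case: (lamP j).
apply: eq_esum => x _.
transitivity (\esum_(m' in Xs s) ((lam j x)%:E *
   (\prod_(l | l \in s) lam l (m' l))%:E))%E.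
  apply: eq_esum => m' Xm'; rewrite -EFinM; congr EFin.
  rewrite (bigD1 j) ?mem_head//= upd_in; congr (_ * _).
  apply: eq_big => l.
    rewrite inE; case: (eqVneq l j) => [->|_] /=; first by rewrite (negPf js).
    by rewrite andbT.
  move=> /andP[_ lj]; rewrite upd_out// eq_sym//.
rewrite esumZl ?IH ?mule1//.
  by case: (lamP j) => h _; exact: h.
move=> m' _; rewrite lee_fin; apply: prodr_ge0 => l _.
by case: (lamP l) => h _; exact: h.
Qed.

End Prod.

Section Mass.
Context {R : realType} {n : nat} {M : 'I_n -> countType} {Z : finType}.
Local Notation prof := (profile M).
Variable lam : forall j : 'I_n, M j -> R.
Hypothesis lamP : forall j, is_mixed (lam j).

Lemma esum_prodQ (Q : pred 'I_n) (m0 : prof) :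
  (\esum_(m in [set m : prof | forall l, ~~ Q l -> m l = m0 l])
     (\prod_(l | Q l) lam l (m l))%:E = 1)%E.
Proof.
have := @esum_prod_seq R n M lam lamP m0 [seq l <- enum 'I_n | Q l].
rewrite filter_uniq ?enum_uniq// => /(_ isT) <-.
have memQ l : (l \in [seq l <- enum 'I_n | Q l]) = Q l.
  by rewrite mem_filter mem_enum andbT.
rewrite /Xs; have -> : [set m : prof | forall l, ~~ Q l -> m l = m0 l] =
    [set m | forall l, l \notin [seq l <- enum 'I_n | Q l] -> m l = m0 l].
  by apply/seteqP; split=> m /= h l; rewrite ?memQ => hl; apply: h; rewrite ?memQ.
by apply: eq_esum => m _; congr EFin; apply: eq_bigl => l; rewrite memQ.
Qed.

Lemma esum_prod_all (m0 : prof) :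
  (\esum_(m in [set: prof]) (\prod_(l : 'I_n) lam l (m l))%:E = 1)%E.
Proof.
rewrite -(esum_prodQ predT m0); congr esum.
by apply/seteqP; split=> m.
Qed.

Lemma esum_prod_dev (m0 : prof) (i : 'I_n) (mi : M i) :
  (\esum_(m in [set m : prof | m i = mi])
     (\prod_(l | l != i) lam l (m l))%:E = 1)%E.
Proof.
rewrite -(esum_prodQ (fun l => l != i) (upd m0 mi)); congr esum.
apply/seteqP; split=> m /=.
  by move=> <- l; rewrite negbK => /eqP ->; rewrite upd_in.
by move=> /(_ i); rewrite eqxx upd_in => ->.
Qed.

Variable g : prof -> Z -> R.
Hypothesis gP : is_mechanism g.

Lemma g_ge0 m z : 0 <= g m z.
Proof. by case: (gP m) => h _; exact: h. Qed.

Lemma g_le1 m z : g m z <= 1.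
Proof.
case: (gP m) => h <-; rewrite (bigD1 z)//= lerDl.
by apply: sumr_ge0 => *; exact: h.
Qed.

Section W.
Variables (D : set prof) (W : prof -> R).
Hypothesis W0 : forall m, 0 <= W m.
Hypothesis W1 : (\esum_(m in D) (W m)%:E = 1)%E.

Let e z := (\esum_(m in D) (W m * g m z)%:E)%E.

Lemma e_fin z : e z \is a fin_num.
Proof.
rewrite ge0_fin_numE; last by apply: esum_ge0 => m _; rewrite lee_fin mulr_ge0// g_ge0.
have h : (e z <= 1)%E.
  rewrite -W1 /e; apply: le_esum => m _.
  by rewrite lee_fin ler_piMr// g_le1.
by rewrite (le_lt_trans h)// ltry.
Qed.

Lemma fine_e_ge0 z : 0 <= fine (e z).
Proof. by apply: fine_ge0; apply: esum_ge0 => m _; rewrite lee_fin mulr_ge0// g_ge0. Qed.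

Lemma mass_e : \sum_(z : Z) fine (e z) = 1.
Proof.
apply: EFin_inj; rewrite EFin_sum_fine; last by move=> z _; exact: e_fin.
rewrite /e -esum_sum; last by move=> m z _ _; rewrite lee_fin mulr_ge0// g_ge0.
rewrite -W1; apply: eq_esum => m _.
rewrite sumEFin -mulr_sumr; case: (gP m) => _ ->; by rewrite mulr1.
Qed.

End W.

End Mass.

Section Dirac.
Context {R : realType} {n : nat} {M : 'I_n -> countType} {Z : finType}.
Local Notation prof := (profile M).
Variable g : prof -> Z -> R.
Hypothesis gP : is_mechanism g.

Definition delta (m : prof) : forall j : 'I_n, M j -> R :=
  fun j t => if t == m j then 1 else 0.

Lemma delta_ge0 m j t : 0 <= delta m j t.
Proof. by rewrite /delta; case: ifP. Qed.

Lemma delta_mixed m : is_mixed_profile (delta m).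
Proof.
move=> j; split; first exact: delta_ge0.
rewrite (@esum_single _ _ _ (m j)) //.
- by rewrite /delta eqxx.
- by rewrite /delta eqxx lee_fin.
- by move=> t _ /eqP h; rewrite /delta (negPf h).
Qed.

Lemma glot_delta m : glot g (delta m) = g m.
Proof.
apply: boolp.funext => z; rewrite /glot (@esum_single _ _ _ m) //.
- by rewrite big1 ?mul1r// => l _; rewrite /delta eqxx.
- by rewrite big1 ?mul1r ?lee_fin ?(g_ge0 _ gP)// => l _; rewrite /delta eqxx.
- move=> m' _ ne.
  have [l hl] : exists l, m' l != m l.
    apply: contrapT => h; apply: ne; apply/ffunP => l.
    by apply/eqP; apply: contrapT => h'; apply: h; exists l; apply/negP.
  by rewrite (bigD1 l)//= /delta (negPf hl) !mul0r.
Qed.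

Lemma glot_dev_delta m j (x : M j) : glot_dev g (delta m) x = g (upd m x).
Proof.
apply: boolp.funext => z; rewrite /glot_dev (@esum_single _ _ _ (upd m x)) //.
- rewrite big1 ?mul1r// => l lj; rewrite /delta upd_out ?eqxx// eq_sym//.
- exact: upd_in.
- rewrite big1 ?mul1r ?lee_fin ?(g_ge0 _ gP)// => l lj.
  by rewrite /delta upd_out ?eqxx// eq_sym.
- move=> m' /= m'j ne.
  have [l hl] : exists l, (l != j) && (m' l != m l).
    apply: contrapT => h; apply: ne; apply/ffunP => l.
    case: (eqVneq j l) => [<-|jl]; first by rewrite upd_in.
    rewrite upd_out//; apply/eqP; apply: contrapT => h'; apply: h; exists l.
    by rewrite eq_sym jl; apply/negP.
  case/andP: hl => lj hl.
  by rewrite (bigD1 l)//= /delta (negPf hl) !mul0r.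
Qed.


Lemma prod_factor_neq0 (P : pred 'I_n) (f : 'I_n -> R) l :
  \prod_(k | P k) f k != 0 -> P l -> f l != 0.
Proof.
move=> h Pl; apply/eqP => fl0; move/eqP: h; apply.
by rewrite (bigD1 l)//= fl0 mul0r.
Qed.

Lemma prod_g_pos (P : pred 'I_n) (lam : forall j, M j -> R) (m : prof) z :
  (forall j t, 0 <= lam j t) ->
  0 < \prod_(l | P l) lam l (m l) * g m z ->
  (forall l, P l -> 0 < lam l (m l)) /\ 0 < g m z.
Proof.
move=> l0 h.
have hp : 0 <= \prod_(l | P l) lam l (m l) by apply: prodr_ge0 => *; exact: l0.
have hg := g_ge0 _ gP m z.
have pn : \prod_(l | P l) lam l (m l) != 0.
  by apply/eqP => e; move: h; rewrite e mul0r ltxx.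
split; last first.
  rewrite lt0r hg andbT; apply/eqP => e; move: h; rewrite e mulr0 ltxx//.
move=> l Pl; rewrite lt0r l0 andbT; exact: (@prod_factor_neq0 P (fun k => lam k (m k)) l pn Pl).
Qed.

Lemma glot_pos lam z : is_mixed_profile lam -> 0 < glot g lam z ->
  exists m : prof, (forall l, 0 < lam l (m l)) /\ 0 < g m z.
Proof.
move=> lamP h.
have l0 j t : 0 <= lam j t by case: (lamP j) => H _; exact: H.
rewrite /glot in h.
have hpos : forall m : prof, [set: prof] m ->
    (0 <= (\prod_(i < n) lam i (m i) * g m z)%:E)%E.
  move=> m _; rewrite lee_fin mulr_ge0 ?(g_ge0 _ gP)//.
  by apply: prodr_ge0 => *; exact: l0.
have [m _ hm] := esum_pos_ex _ _ hpos h.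
rewrite lte_fin in hm.
have [h1 h2] := @prod_g_pos predT lam m z l0 hm.
by exists m; split=> // l; exact: h1.
Qed.

Lemma glot_dev_pos lam i (mi : M i) z : is_mixed_profile lam ->
  0 < glot_dev g lam mi z ->
  exists m : prof, [/\ m i = mi, (forall l, l != i -> 0 < lam l (m l)) & 0 < g m z].
Proof.
move=> lamP h.
have l0 j t : 0 <= lam j t by case: (lamP j) => H _; exact: H.
rewrite /glot_dev in h.
have hpos : forall m : prof, [set m : prof | m i = mi] m ->
    (0 <= (\prod_(j | j != i) lam j (m j) * g m z)%:E)%E.
  move=> m _; rewrite lee_fin mulr_ge0 ?(g_ge0 _ gP)//.
  by apply: prodr_ge0 => *; exact: l0.
have [m mi_ hm] := esum_pos_ex _ _ hpos h.
rewrite lte_fin in hm.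
have [h1 h2] := @prod_g_pos (fun j => j != i) lam m z l0 hm.
by exists m; split.
Qed.

End Dirac.

Section Game.
Context {R : realType} {n : nat} {Theta : countType} {Z : finType}
  {M : 'I_n -> countType}.
Variables (u : 'I_n -> Theta -> Z -> R) (F : Theta -> set Z)
  (g : profile M -> Z -> R).
Local Notation prof := (profile M).
Hypothesis gP : is_mechanism g.
Hypothesis Himpl : mixed_nash_A_impl u F g.

Local Notation Zs := (Zstar u F).

Lemma g_sum (m : prof) : \sum_z g m z = 1.
Proof. by case: (gP m). Qed.

Lemma Uexp_le j th (p : Z -> R) c : (forall z, 0 <= p z) -> \sum_z p z = 1 ->
  (forall z, 0 < p z -> u j th z <= c) -> Uexp u j th p <= c.
Proof.
move=> p0 p1 h; rewrite /Uexp.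
apply: (@le_trans _ _ (\sum_z p z * c)).
  apply: ler_sum => z _; have := p0 z; rewrite le0r => /orP[/eqP->|pz].
    by rewrite !mul0r.
  by rewrite ler_wpM2l// h.
by rewrite -mulr_suml p1 mul1r.
Qed.

Lemma Uexp_ge j th (p : Z -> R) c : (forall z, 0 <= p z) -> \sum_z p z = 1 ->
  (forall z, 0 < p z -> c <= u j th z) -> c <= Uexp u j th p.
Proof.
move=> p0 p1 h; rewrite /Uexp.
apply: (@le_trans _ _ (\sum_z p z * c)).
  by rewrite -mulr_suml p1 mul1r.
apply: ler_sum => z _; have := p0 z; rewrite le0r => /orP[/eqP->|pz].
  by rewrite !mul0r.
by rewrite ler_wpM2l// h.
Qed.

Lemma Uexp_gt j th (p : Z -> R) c z0 : (forall z, 0 <= p z) -> \sum_z p z = 1 ->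
  (forall z, 0 < p z -> c <= u j th z) -> 0 < p z0 -> c < u j th z0 ->
  c < Uexp u j th p.
Proof.
move=> p0 p1 h pz0 cz0; rewrite /Uexp.
have e : \sum_z p z * u j th z - c = \sum_z p z * (u j th z - c).
  rewrite -{1}(mul1r c) -p1 mulr_suml -sumrB.
  by apply: eq_bigr => z _; rewrite mulrBr.
rewrite -subr_gt0 e (bigD1 z0)//=.
apply: (@lt_le_trans _ _ (p z0 * (u j th z0 - c))).
  by rewrite mulr_gt0// subr_gt0.
rewrite lerDl; apply: sumr_ge0 => z _.
have [->|pz] := eqVneq (p z) 0; first by rewrite mul0r.
by rewrite mulr_ge0// subr_ge0 h// lt0r pz p0.
Qed.

Lemma pure_MNE th (m : prof) :
  (forall j (x : M j), Uexp u j th (g (upd m x)) <= Uexp u j th (g m)) ->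
  SUPP (g m) `<=` F th.
Proof.
move=> h z hz; rewrite -(Himpl th); exists (delta m).
  split; first exact: delta_mixed.
  by move=> j x; rewrite (glot_dev_delta _ gP) (glot_delta _ gP).
by rewrite /SUPP /= (glot_delta _ gP).
Qed.

Lemma range_Zs (m : prof) z : 0 < g m z -> Zs z.
Proof.
move=> hz; rewrite /Zstar; case: asboolP => [[i0 [_ [th0 [H1 H2]]]]|_] //.
exists th0; apply: (pure_MNE th0 m) hz => j x.
have cst : forall z1 z2, u j th0 z1 <= u j th0 z2.
  move=> z1 z2; case: (eqVneq j i0) => [->|ji].
    by case: (H1 z2 I) => _ /(_ z1 I).
  by case: (H2 j ji z2 I) => _ /(_ z1 I).
apply: (@le_trans _ _ (u j th0 z)).
  by apply: Uexp_le => [z'||z' _]; [exact: (g_ge0 _ gP)|exact: g_sum|exact: cst].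
by apply: Uexp_ge => [z'||z' _]; [exact: (g_ge0 _ gP)|exact: g_sum|exact: cst].
Qed.


Lemma sub_max i B B' th' : B' `<=` B -> B' !=set0 ->
  Lambda u F i B th' -> Lambda u F i B' th'.
Proof.
move=> sub ne [_ [BZ [Bi Bj]]]; split=> //; split; first by move=> z /sub /BZ.
split.
  move=> z hz; split=> // z' hz'.
  by case: (Bi z (sub _ hz)) => _ /(_ z' (sub _ hz')).
by move=> j ji z hz; exact: Bj j ji z (sub _ hz).
Qed.

Variables (i : 'I_n) (th : Theta).
Hypothesis Hmin : F th `<=` argmin_in (u i th) Zs.
Hypothesis HF : F th !=set0.

Definition Sup (lam : forall j, M j -> R) : set prof :=
  [set m | forall l, l != i -> 0 < lam l (m l)].
Definition Aset lam : set Z := [set z | exists m, Sup lam m /\ 0 < g m z].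
Definition Eset : set Z := Zs `&` LZset u i th (F th).

Lemma Fth_val z w : F th z -> F th w -> u i th z = u i th w.
Proof.
move=> /Hmin [Zz hz] /Hmin [Zw hw].
by apply/eqP; rewrite eq_le hz// hw.
Qed.

Lemma FE : F th `<=` Eset.
Proof.
move=> z hz; split; first by case: (Hmin _ hz).
by move=> w hw; rewrite (Fth_val _ _ hz hw).
Qed.

Lemma A_Zs lam : Aset lam `<=` Zs.
Proof. by move=> z [m [_ gz]]; exact: range_Zs gz. Qed.

Lemma A_L lam : MNE u g th lam -> Aset lam `<=` LZset u i th (F th).
Proof.
move=> [lamP hne] z [m [hm gz]] w Fw.
rewrite leNgt; apply/negP => cz.
have l0 j t : 0 <= lam j t by case: (lamP j) => H _; exact: H.
have W0a : forall m' : prof, 0 <= \prod_(l < n) lam l (m' l).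
  by move=> m'; apply: prodr_ge0 => *; exact: l0.
have W0d : forall m' : prof, 0 <= \prod_(l | l != i) lam l (m' l).
  by move=> m'; apply: prodr_ge0 => *; exact: l0.
have q0 := fine_e_ge0 _ gP setT _ W0a.
have q1 := mass_e _ gP _ _ W0a (esum_prod_all _ lamP m).
have p0 := fine_e_ge0 _ gP [set m' : prof | m' i = m i] _ W0d.
have p1 := mass_e _ gP _ _ W0d (esum_prod_dev _ lamP m i (m i)).
have pfin := e_fin _ gP _ _ W0d (esum_prod_dev _ lamP m i (m i)).
set c := u i th w.
have hq : Uexp u i th (glot g lam) <= c.
  apply: Uexp_le => //= z' qz'.
  have Fz' : F th z' by rewrite -(Himpl th); exists lam.
  by rewrite (Fth_val _ _ Fz' Fw).
have hp : c < Uexp u i th (glot_dev g lam (m i)).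
  apply: (@Uexp_gt _ _ _ _ z) => //.
  - move=> z' pz'; have [m' [_ _ gz']] := glot_dev_pos _ gP _ _ _ _ lamP pz'.
    by case: (Hmin _ Fw) => _ h; apply: h; exact: range_Zs gz'.
  - rewrite /glot_dev.
    set e := (X in fine X).
    have hfin : e \is a fin_num by exact: pfin.
    have hW : 0 < \prod_(l | l != i) lam l (m l) by apply: prodr_gt0 => l /hm.
    have he : ((\prod_(l | l != i) lam l (m l) * g m z)%:E <= e)%E.
      apply: esum_ge; exists [set m].
        by split; [exact: finite_set1|move=> m' ->].
      by rewrite fsbig_set1.
    rewrite -(fineK hfin) lee_fin in he.
    by apply: lt_le_trans he; rewrite mulr_gt0.
have := hne i (m i); rewrite leNgt => /negP; apply.
exact: le_lt_trans hq hp.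
Qed.


Lemma A_E lam : MNE u g th lam -> Aset lam `<=` Eset.
Proof. by move=> h z Az; split; [exact: A_Zs Az|exact: A_L h z Az]. Qed.

Lemma A_F lam B th' : Aset lam `<=` B -> Lambda u F i B th' ->
  Aset lam `<=` F th'.
Proof.
move=> AB [[b0 Bb0] [BZ [Bi Bj]]] z [m [hm gz]].
suff : SUPP (g m) `<=` F th' by apply.
apply: pure_MNE => j x.
have g0 := g_ge0 _ gP; have g1 := g_sum.
have supp_m z' : 0 < g m z' -> B z' by move=> h; apply: AB; exists m.
case: (eqVneq j i) => [ji|ji].
  subst j; apply: (@le_trans _ _ (u i th' b0)).
    apply: Uexp_le => // z' hz'.
    have Bz' : B z'.
      apply: AB; exists (upd m x); split => // l li.
      by rewrite upd_out ?hm// eq_sym.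
    by case: (Bi z' Bz') => _ _; case: (Bi b0 Bb0) => _ /(_ z' Bz').
  apply: Uexp_ge => // z' hz'.
  by case: (Bi z' (supp_m z' hz')) => _ /(_ b0 Bb0).
apply: (@le_trans _ _ (u j th' b0)).
  apply: Uexp_le => // z' hz'.
  by case: (Bj j ji b0 Bb0) => _ /(_ z' (range_Zs _ _ hz')).
apply: Uexp_ge => // z' hz'.
by case: (Bj j ji z' (supp_m _ hz')) => _ /(_ b0 (BZ _ Bb0)).
Qed.

Lemma LamE_Theta : Lambda u F i Eset `<=` Theta_i u F i th.
Proof.
move=> th' hE; split; first exact: (sub_max _ _ _ _ FE HF hE).
move=> z Fz; move: Fz; rewrite -(Himpl th) => -[lam' hlam' hz].
have [m [hm gz]] := glot_pos _ gP _ _ (proj1 hlam') hz.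
apply: (A_F lam' Eset th' (A_E lam' hlam') hE).
by exists m; split=> // l _; exact: hm.
Qed.


Lemma main lam : MNE u g th lam -> Lambda u F i Eset !=set0 ->
  \bigcup_(mi in [set: M i]) SUPP (glot_dev g lam mi)
    `<=` Eset `&` \bigcup_(K in Xi u F i th) \bigcap_(th' in K) F th'.
Proof.
move=> Hlam HE.
set Th := Theta_i u F i th.
pose Phi (K : set Theta) :=
  Th `&` Lambda u F i (Eset `&` \bigcap_(t in K `&` Th) F t).
have FBne : forall K, (Eset `&` \bigcap_(t in K `&` Th) F t) !=set0.
  move=> K; case: HF => z0 hz0; exists z0; split; first exact: FE.
  by move=> t [_ [_ sub]]; exact: sub.
have Phi_mono : forall K1 K2, K1 `<=` K2 -> Phi K1 `<=` Phi K2.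
  move=> K1 K2 sub t [Tht Lt]; split=> //.
  apply: (sub_max _ _ _ _ _ (FBne K2) Lt).
  move=> z [Ez hz]; split=> // t' [K1t' Tht']; apply: hz; split=> //.
  exact: sub.
pose L := \bigcap_(K in [set K | Phi K `<=` K]) K.
have PhiL : Phi L `<=` L.
  move=> t Pt K PK; apply: (PK t); apply: (Phi_mono L K) Pt => t' Lt'.
  exact: Lt' K PK.
have LPhi : L `<=` Phi L.
  by move=> t Lt; apply: Lt; apply: Phi_mono; exact: PhiL.
have AE := A_E lam Hlam.
have LG : L `<=` [set t | Aset lam `<=` F t].
  suff : L `<=` L `&` [set t | Aset lam `<=` F t] by move=> h t /h [].
  move=> t Lt; apply: Lt => t' Pt'; split.
    by apply: PhiL; apply: (Phi_mono _ L) Pt' => ? [].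
  case: Pt' => _ hl; apply: (A_F lam _ t' _ hl) => z Az; split; first exact: AE.
  by move=> t'' [[_ Gt''] _]; exact: Gt'' z Az.
have LTh : L `<=` Th by move=> t /LPhi [].
have BC : \bigcap_(t in L `&` Th) F t = \bigcap_(t in L) F t.
  apply/seteqP; split=> z hz t.
    by move=> Lt; apply: hz; split=> //; exact: LTh.
  by move=> [Lt _]; exact: hz.
have LXi : Xi u F i th L.
  split=> //; split.
    case: HE => t0 Et0; exists t0; apply: PhiL; split; first exact: LamE_Theta.
    apply: (sub_max _ _ _ _ _ (FBne L) Et0); by move=> z [].
  apply/seteqP; split.
    by move=> t [Tht Lt]; apply: PhiL; split=> //; rewrite BC.
  by move=> t /LPhi [Tht Lt]; split=> //; rewrite -BC.
move=> z [mi _ hz].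
have [m [hmi hm gz]] := glot_dev_pos _ gP _ _ _ _ (proj1 Hlam) hz.
have Az : Aset lam z by exists m.
split; first exact: AE.
by exists L => // t Lt; exact: LG t Lt z Az.
Qed.

End Game.


Theorem lemma7 (R : realType) (n : nat) (Theta : countType) (Z : finType)
  (u : 'I_n -> Theta -> Z -> R) (F : Theta -> set Z)
  (M : 'I_n -> countType) (g : profile M -> Z -> R) :
  (3 <= n)%N ->
  (forall th, F th !=set0) ->
  is_mechanism g ->
  mixed_nash_A_impl u F g ->
  forall (i : 'I_n) (th : Theta) (lam : forall j : 'I_n, M j -> R),
    MNE u g th lam ->
    F th `<=` argmin_in (u i th) (Zstar u F) ->
    Xi u F i th !=set0 ->
    iZstar_max u F i (Zstar u F `&` LZset u i th (F th)) ->
    \bigcup_(mi in [set: M i]) SUPP (glot_dev g lam mi)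
      `<=` Zstar u F `&` LZset u i th (F th)
           `&` \bigcup_(K in Xi u F i th) \bigcap_(th' in K) F th'.
Proof.
move=> _ HF gP Himpl i th lam Hlam Hmin _ HE.
have h := main u F g gP Himpl i th Hmin (HF th) lam Hlam HE.
rewrite /Eset in h.
exact: h.
Qed.
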